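(* In the line network model (see context) with $\ell\ge2$ links and any erasure probabilities $p_1,\dots,p_\ell\in[0,1)$, the process $(Y_k)_{1\le k\le n}$ is stochastically increasing: for all $1\le k\le k'\le n$ and all $\omega\in\mathbb{N}^{\ell-1}$, $$\mathbb{P}(Y_k\succeq\omega)\le\mathbb{P}(Y_{k'}\succeq\omega),$$ where $\succeq$ is the componentwise order on $\mathbb{N}^{\ell-1}$ ($a\succeq b$ iff $a_j\ge b_j$ for all $j$).
   Context: Line network model. Fix integers $\ell\ge1$, $n\ge1$ and erasure probabilities $p_1,\dots,p_\ell\in[0,1)$. Let $\{z_{t,i}\}$ be independent Bernoulli variables with $\mathbb{P}(z_{t,i}=1)=1-p_i$. The rank $\rho_i(t)$ of node $N^{(i)}$ after $t$ steps satisfies $\rho_1(t)=n$, $\rho_i(0)=0$ for $i\ge2$, and $\rho_{i+1}(t)=\rho_{i+1}(t-1)+z_{t,i}\mathbf 1\{\rho_i(t-1)>\rho_{i+1}(t-1)\}$ for $t\ge1$, $1\le i\le\ell$; $\rho_i-\rho_{i+1}$ is the number of innovative packets at node $N^{(i)}$. For $1\le k\le n$ let $\sigma_k:=\min\{t:\rho_2(t)=k\}$ be the time step at which the $k$-th packet arrives at $N^{(2)}$, and let $Y_k:=(R^{(2)}_k,\dots,R^{(\ell)}_k)$ with $R^{(i)}_k:=\rho_i(\sigma_k)-\rho_{i+1}(\sigma_k)$, the numbers of innovative packets at nodes $N^{(2)},\dots,N^{(\ell)}$ at that moment (including packet $k$). *)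

(* Defs.v *)
From Stdlib Require Import Reals Arith List.
Open Scope R_scope.

Definition upd (b : nat -> bool) (j : nat) (v : bool) : nat -> bool :=
  fun x => if Nat.eqb x j then v else b x.

(* Esum m q F = E[F(b)] where b_0,...,b_{m-1} are independent Bernoulli
   variables with P(b_j = true) = q j, and b_j = false for j >= m.
   When F only depends on the coordinates < m this is the exact expectation. *)
Fixpoint Esum (m : nat) (q : nat -> R) (F : (nat -> bool) -> R) : R :=
  match m with
  | O => F (fun _ => false)
  | S m' => q m' * Esum m' q (fun b => F (upd b m' true))
          + (1 - q m') * Esum m' q (fun b => F (upd b m' false))
  end.

(* Coordinates: z_{t,i} (t >= 1, 1 <= i <= l) is stored at index (t-1)*l + (i-1). *)
Definition zof (l : nat) (b : nat -> bool) (t i : nat) : bool :=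
  b ((t - 1) * l + (i - 1))%nat.

(* Success probability of coordinate j : 1 - p_i with i = j mod l + 1. *)
Definition qof (l : nat) (p : nat -> R) (j : nat) : R :=
  1 - p (Nat.modulo j l + 1)%nat.

(* Ranks rho t i (meaningful for 1 <= i <= l+1):
   rho_1(t) = n, rho_i(0) = 0 for i >= 2,
   rho_{i+1}(t) = rho_{i+1}(t-1) + z_{t,i} * 1{rho_i(t-1) > rho_{i+1}(t-1)}. *)
Fixpoint rho (n : nat) (z : nat -> nat -> bool) (t : nat) (i : nat) : nat :=
  match t with
  | O => if Nat.leb i 1 then n else O
  | S t' =>
      match i with
      | O => n
      | S O => n
      | S i' => (rho n z t' i
                 + (if andb (z t i') (Nat.ltb (rho n z t' i) (rho n z t' i'))
                    then 1 else 0))%nat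
      end
  end.

(* t = sigma_k : first time with rho_2(t) = k. *)
Definition is_sigma (n : nat) (z : nat -> nat -> bool) (k t : nat) : bool :=
  andb (Nat.eqb (rho n z t 2) k)
       (forallb (fun s => negb (Nat.eqb (rho n z s 2) k)) (seq 0 t)).

(* Y ⪰ omega at time t: omega_j <= R^{(j+2)} = rho_{j+2}(t) - rho_{j+3}(t)
   for j = 0 .. l-2 (omega's first l-1 entries form the vector in N^{l-1}). *)
Definition Y_ge (l n : nat) (z : nat -> nat -> bool) (t : nat) (w : nat -> nat) : bool :=
  forallb (fun j => Nat.leb (w j) (rho n z t (j + 2) - rho n z t (j + 3)))
          (seq 0 (l - 1)).

(* P(sigma_k = t and Y_k ⪰ omega); the event depends only on z_{s,i},
   s <= t, i <= l, i.e. on coordinates < t*l. *)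
Definition prob_term (l n : nat) (p : nat -> R) (k : nat) (w : nat -> nat) (t : nat) : R :=
  Esum (t * l)%nat (qof l p)
    (fun b => if andb (is_sigma n (zof l b) k t) (Y_ge l n (zof l b) t w)
              then 1 else 0).

(* Main.v *)
Require Import Defs.
From Stdlib Require Import Reals Arith List Lia Lra FunctionalExtensionality Classical.
Open Scope R_scope.

Definition dep (m : nat) (F : (nat -> bool) -> R) : Prop :=
  forall b b', (forall j, (j < m)%nat -> b j = b' j) -> F b = F b'.

Definition shift (a : nat) (b : nat -> bool) : nat -> bool := fun j => b (a + j)%nat.

Fixpoint mysum (f : nat -> R) (N : nat) : R :=
  match N with O => 0 | S N' => mysum f N' + f N' end.

Lemma Esum_ext m q F G : (forall b, F b = G b) -> Esum m q F = Esum m q G.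
Proof. intros H. replace G with F; [reflexivity|apply functional_extensionality; auto]. Qed.

Lemma Esum_const m q c : Esum m q (fun _ => c) = c.
Proof. induction m; simpl; auto. rewrite IHm. ring. Qed.

Lemma Esum_plus m q F G : Esum m q (fun b => F b + G b) = Esum m q F + Esum m q G.
Proof.
  revert F G; induction m; intros F G; simpl; auto.
  rewrite (IHm (fun b => F (upd b m true)) (fun b => G (upd b m true))).
  rewrite (IHm (fun b => F (upd b m false)) (fun b => G (upd b m false))). ring.
Qed.

Lemma Esum_scal m q c F : Esum m q (fun b => c * F b) = c * Esum m q F.
Proof.
  revert F; induction m; intros F; simpl; auto.
  rewrite (IHm (fun b => F (upd b m true))).
  rewrite (IHm (fun b => F (upd b m false))). ring.
Qed.

Lemma Esum_mono m q F G : (forall j, (j < m)%nat -> 0 <= q j <= 1) ->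
  (forall b, F b <= G b) -> Esum m q F <= Esum m q G.
Proof.
  revert F G; induction m; intros F G Hq H; simpl; auto.
  assert (Hm : 0 <= q m <= 1) by (apply Hq; lia).
  assert (H1 := IHm (fun b => F (upd b m true)) (fun b => G (upd b m true))).
  assert (H2 := IHm (fun b => F (upd b m false)) (fun b => G (upd b m false))).
  assert (Hq' : forall j, (j < m)%nat -> 0 <= q j <= 1) by (intros; apply Hq; lia).
  specialize (H1 Hq' (fun b => H _)). specialize (H2 Hq' (fun b => H _)).
  apply Rplus_le_compat; apply Rmult_le_compat_l; lra.
Qed.

Lemma Esum_nonneg m q F : (forall j, (j < m)%nat -> 0 <= q j <= 1) ->
  (forall b, 0 <= F b) -> 0 <= Esum m q F.
Proof. intros Hq H. rewrite <- (Esum_const m q 0). apply Esum_mono; auto. Qed.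

Lemma Esum_mysum m q (F : nat -> (nat -> bool) -> R) N :
  Esum m q (fun b => mysum (fun i => F i b) N) = mysum (fun i => Esum m q (F i)) N.
Proof.
  induction N; simpl. apply Esum_const.
  rewrite (Esum_plus m q (fun b => mysum (fun i => F i b) N) (F N)). rewrite IHN. auto.
Qed.

Lemma Esum_trunc m d q F : dep m F -> Esum (m + d) q F = Esum m q F.
Proof.
  intros HF. induction d. rewrite Nat.add_0_r; auto.
  rewrite Nat.add_succ_r. cbn [Esum].
  rewrite (Esum_ext _ _ (fun b => F (upd b (m + d) true)) F).
  rewrite (Esum_ext _ _ (fun b => F (upd b (m + d) false)) F).
  rewrite IHd. ring.
  all: intros b; apply HF; intros j Hj; unfold upd; destruct (Nat.eqb_spec j (m+d)); auto; lia.
Qed.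

Lemma Esum_trunc' m m' q F : dep m F -> (m <= m')%nat -> Esum m' q F = Esum m q F.
Proof. intros HF Hm. replace m' with (m + (m' - m))%nat by lia. apply Esum_trunc; auto. Qed.

Lemma shift_upd a c v b : shift a (upd b (a + c) v) = upd (shift a b) c v.
Proof.
  apply functional_extensionality; intros j; unfold shift, upd.
  destruct (Nat.eqb_spec (a + j) (a + c)); destruct (Nat.eqb_spec j c); auto; lia.
Qed.

Lemma Esum_prod a c q F G : dep a F -> dep c G ->
  Esum (a + c) q (fun b => F b * G (shift a b)) = Esum a q F * Esum c (fun j => q (a + j)%nat) G.
Proof.
  intros HF. revert G; induction c; intros G HG.
  - rewrite Nat.add_0_r. cbn [Esum].
    rewrite (Esum_ext _ _ _ (fun b => G (fun _ => false) * F b)).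
    rewrite Esum_scal. ring.
    intros b. rewrite (HG (shift a b) (fun _ => false)). ring. intros; lia.
  - rewrite Nat.add_succ_r. cbn [Esum].
    assert (E : forall v, Esum (a + c) q (fun b => F (upd b (a + c) v) * G (shift a (upd b (a + c) v)))
              = Esum a q F * Esum c (fun j => q (a + j)%nat) (fun x => G (upd x c v))).
    { intros v. rewrite <- IHc.
      apply Esum_ext. intros b. rewrite shift_upd. f_equal.
      apply HF. intros j Hj; unfold upd; destruct (Nat.eqb_spec j (a+c)); auto; lia.
      intros x y Hxy. apply HG. intros j Hj. unfold upd. destruct (Nat.eqb_spec j c); auto. apply Hxy; lia. }
    rewrite !E. ring.
Qed.

Lemma rho_1 n z t : rho n z t 1 = n.
Proof. destruct t; reflexivity. Qed.
Lemma rho_0i n z t : rho n z t 0 = n.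
Proof. destruct t; reflexivity. Qed.
Lemma rho_S' n z t i : rho n z (S t) (S (S i)) =
  (rho n z t (S (S i)) + if andb (z (S t) (S i)) (Nat.ltb (rho n z t (S (S i))) (rho n z t (S i))) then 1 else 0)%nat.
Proof. reflexivity. Qed.
Lemma rho_00 n z i : rho n z 0 (S (S i)) = 0%nat.
Proof. reflexivity. Qed.

Lemma rho_step n z t i : (rho n z t i <= rho n z (S t) i)%nat.
Proof.
  destruct i as [|[|i]]. rewrite !rho_0i; lia. rewrite !rho_1; lia.
  rewrite rho_S'. lia.
Qed.

Lemma rho_mono n z u v i : (u <= v)%nat -> (rho n z u i <= rho n z v i)%nat.
Proof.
  induction 1. lia. eapply Nat.le_trans. apply IHle. apply rho_step.
Qed.

Lemma rho_rank n z t i : (rho n z t (S (S i)) <= rho n z t (S i))%nat.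
Proof.
  induction t. rewrite rho_00; lia.
  rewrite rho_S'. destruct (z (S t) (S i)); cbn [andb];
  [destruct (Nat.ltb_spec (rho n z t (S (S i))) (rho n z t (S i))); cbn [andb]|];
  assert (HH := rho_step n z t (S i)); lia.
Qed.

Lemma couple n z z2 s m (Hm : rho n z s 2 = m)
  (Hz : forall t i, z2 (S t) i = z (S (s + t)) i) :
  forall t, (rho n z2 t 2 + m <= n)%nat ->
  rho n z (s + t) 2 = (rho n z2 t 2 + m)%nat /\
  forall i, (rho n z2 t (S (S i)) - rho n z2 t (S (S (S i)))
             <= rho n z (s + t) (S (S i)) - rho n z (s + t) (S (S (S i))))%nat.
Proof.
  induction t; intros H.
  - rewrite Nat.add_0_r. split. rewrite Hm. reflexivity. intros i. rewrite !rho_00. lia.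
  - assert (H' : (rho n z2 t 2 + m <= n)%nat) by (assert (X := rho_step n z2 t 2); lia).
    destruct (IHt H') as [E D].
    rewrite Nat.add_succ_r.
    rewrite !rho_S' in *. rewrite !Hz in *. rewrite !rho_1 in *.
    split.
    + destruct (z (S (s + t)) 1%nat); cbn [andb] in *; auto;
      destruct (Nat.ltb_spec (rho n z (s + t) 2%nat) n);
      destruct (Nat.ltb_spec (rho n z2 t 2%nat) n); cbn [andb] in *; lia.
    + intros i. rewrite !rho_S'. rewrite !Hz. destruct i as [|i].
      * rewrite !rho_1. specialize (D 0%nat).
        assert (R1 := rho_rank n z (s+t) 1%nat). assert (R2 := rho_rank n z2 t 1%nat).
        destruct (z (S (s + t)) 1%nat); destruct (z (S (s + t)) 2%nat); cbn [andb] in *;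
        destruct (Nat.ltb_spec (rho n z (s + t) 2%nat) n);
        destruct (Nat.ltb_spec (rho n z2 t 2%nat) n);
        destruct (Nat.ltb_spec (rho n z (s + t) 3%nat) (rho n z (s + t) 2%nat));
        destruct (Nat.ltb_spec (rho n z2 t 3%nat) (rho n z2 t 2%nat)); cbn [andb] in *; lia.
      * assert (D0 := D i). assert (D1 := D (S i)).
        assert (R1 := rho_rank n z (s+t) (S (S i))). assert (R2 := rho_rank n z2 t (S (S i))).
        assert (R3 := rho_rank n z (s+t) (S i)). assert (R4 := rho_rank n z2 t (S i)).
        destruct (z (S (s + t)) (S (S i))); destruct (z (S (s + t)) (S (S (S i)))); cbn [andb];
        destruct (Nat.ltb_spec (rho n z (s + t) (S (S (S i)))) (rho n z (s + t) (S (S i))));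
        destruct (Nat.ltb_spec (rho n z2 t (S (S (S i)))) (rho n z2 t (S (S i))));
        destruct (Nat.ltb_spec (rho n z (s + t) (S (S (S (S i))))) (rho n z (s + t) (S (S (S i)))));
        destruct (Nat.ltb_spec (rho n z2 t (S (S (S (S i))))) (rho n z2 t (S (S (S i))))); cbn [andb]; lia.
Qed.

Lemma is_sigma_spec n z k t : is_sigma n z k t = true <->
  rho n z t 2 = k /\ forall u, (u < t)%nat -> rho n z u 2 <> k.
Proof.
  unfold is_sigma. rewrite Bool.andb_true_iff, Nat.eqb_eq, forallb_forall.
  split; intros [H1 H2]; split; auto.
  - intros u Hu. specialize (H2 u). rewrite in_seq in H2.
    assert (X := H2 ltac:(lia)). apply Bool.negb_true_iff, Nat.eqb_neq in X. auto.
  - intros u Hu. rewrite in_seq in Hu. apply Bool.negb_true_iff, Nat.eqb_neq. apply H2; lia.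
Qed.

Lemma Y_ge_spec l n z t w : Y_ge l n z t w = true <->
  forall j, (j < l - 1)%nat -> (w j <= rho n z t (S (S j)) - rho n z t (S (S (S j))))%nat.
Proof.
  unfold Y_ge. rewrite forallb_forall. split.
  - intros H j Hj. specialize (H j). rewrite in_seq in H. assert (X := H ltac:(lia)).
    apply Nat.leb_le in X. replace (j+2)%nat with (S (S j)) in X by lia.
    replace (j+3)%nat with (S (S (S j))) in X by lia. auto.
  - intros H j Hj. rewrite in_seq in Hj. apply Nat.leb_le.
    replace (j+2)%nat with (S (S j)) by lia. replace (j+3)%nat with (S (S (S j))) by lia. apply H; lia.
Qed.

Lemma key l n b s k t w : (1 <= k)%nat -> (S k <= n)%nat ->
  is_sigma n (zof l b) 1 s = true ->
  is_sigma n (zof l (shift (s*l) b)) k t = true ->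
  Y_ge l n (zof l (shift (s*l) b)) t w = true ->
  is_sigma n (zof l b) (S k) (s + t) = true /\ Y_ge l n (zof l b) (s + t) w = true.
Proof.
  intros Hk Hn H1 H2 H3.
  apply is_sigma_spec in H1 as [H1a H1b]. apply is_sigma_spec in H2 as [H2a H2b].
  assert (Hz : forall t i, zof l (shift (s*l) b) (S t) i = zof l b (S (s + t)) i).
  { intros t' i. unfold zof, shift. f_equal.
    replace (S t' - 1)%nat with t' by lia. replace (S (s + t') - 1)%nat with (s + t')%nat by lia.
    rewrite Nat.mul_add_distr_r. lia. }
  assert (C := couple n (zof l b) (zof l (shift (s*l) b)) s 1 H1a Hz).
  destruct (C t ltac:(lia)) as [E D].
  split.
  - apply is_sigma_spec. split. lia.
    intros u Hu. destruct (Nat.lt_ge_cases u s).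
    + assert (X := rho_mono n (zof l b) u s 2 ltac:(lia)). lia.
    + replace u with (s + (u - s))%nat by lia.
      assert (X := rho_mono n (zof l (shift (s*l) b)) (u - s) t 2 ltac:(lia)).
      destruct (C (u - s)%nat ltac:(lia)) as [E' _].
      assert (Y := H2b (u - s)%nat ltac:(lia)). lia.
  - apply Y_ge_spec. rewrite Y_ge_spec in H3. intros j Hj. specialize (H3 j Hj). specialize (D j). lia.
Qed.

Lemma rho_dep l n b b' T : (forall j, (j < T*l)%nat -> b j = b' j) ->
  forall u i, (u <= T)%nat -> (i <= S l)%nat -> rho n (zof l b) u i = rho n (zof l b') u i.
Proof.
  intros H u. induction u; intros i Hu Hi. reflexivity.
  destruct i as [|[|i]]. rewrite !rho_0i; auto. rewrite !rho_1; auto.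
  rewrite !rho_S'. rewrite !IHu by lia.
  replace (zof l b (S u) (S i)) with (zof l b' (S u) (S i)). reflexivity.
  unfold zof. symmetry. apply H. replace (S u - 1)%nat with u by lia. replace (S i - 1)%nat with i by lia. nia.
Qed.

Lemma is_sigma_dep l n b b' T k t : (forall j, (j < T*l)%nat -> b j = b' j) -> (t <= T)%nat -> (1 <= l)%nat ->
  is_sigma n (zof l b) k t = is_sigma n (zof l b') k t.
Proof.
  intros H Ht Hl. apply Bool.eq_iff_eq_true. rewrite !is_sigma_spec.
  rewrite !(rho_dep l n b b' T H t 2) by lia.
  split; intros [A B]; split; auto; intros u Hu; specialize (B u Hu);
  rewrite (rho_dep l n b b' T H u 2) in * by lia; auto.
Qed.

Lemma Y_ge_dep l n b b' T t w : (forall j, (j < T*l)%nat -> b j = b' j) -> (t <= T)%nat ->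
  Y_ge l n (zof l b) t w = Y_ge l n (zof l b') t w.
Proof.
  intros H Ht. apply Bool.eq_iff_eq_true. rewrite !Y_ge_spec.
  split; intros A j Hj; specialize (A j Hj);
  rewrite !(rho_dep l n b b' T H t) in * by lia; auto.
Qed.

Lemma mysum_ext_lt f g N : (forall i, (i < N)%nat -> f i = g i) -> mysum f N = mysum g N.
Proof. induction N; intros H; simpl; auto. rewrite IHN by (intros; apply H; lia). rewrite H by lia. auto. Qed.

Lemma mysum_mono_lt f g N : (forall i, (i < N)%nat -> f i <= g i) -> mysum f N <= mysum g N.
Proof. induction N; intros H; simpl. lra. apply Rplus_le_compat. apply IHN; intros; apply H; lia. apply H; lia. Qed.

Lemma mysum_nonneg f N : (forall i, 0 <= f i) -> 0 <= mysum f N.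
Proof. intros H. induction N; simpl. lra. specialize (H N). lra. Qed.

Lemma mysum_scal_l c f N : mysum (fun i => c * f i) N = c * mysum f N.
Proof. induction N; simpl. ring. rewrite IHN. ring. Qed.

Lemma mysum_scal_r c f N : mysum (fun i => f i * c) N = mysum f N * c.
Proof. induction N; simpl. ring. rewrite IHN. ring. Qed.

Lemma mysum_shift f a T : mysum f (a + T) = mysum f a + mysum (fun t => f (a + t)%nat) T.
Proof. induction T; simpl. rewrite Nat.add_0_r. ring. rewrite Nat.add_succ_r. simpl. rewrite IHT. ring. Qed.

Lemma mysum_le_N f N N' : (forall i, 0 <= f i) -> (N <= N')%nat -> mysum f N <= mysum f N'.
Proof.
  intros H HN. replace N' with (N + (N' - N))%nat by lia. rewrite mysum_shift.
  assert (X := mysum_nonneg (fun t => f (N + t)%nat) (N' - N) (fun i => H _)). lra.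
Qed.

Lemma mysum_single a g s0 N : (forall s, s <> s0 -> a s = 0) ->
  mysum (fun s => a s * g s) N = if Nat.ltb s0 N then a s0 * g s0 else 0.
Proof.
  intros H. induction N; cbn [mysum]. auto. rewrite IHN.
  destruct (Nat.ltb_spec s0 N); destruct (Nat.ltb_spec s0 (S N)); try lia.
  rewrite (H N) by lia. ring.
  destruct (Nat.eq_dec N s0). subst. ring. lia. rewrite (H N) by lia. ring.
Qed.

Lemma sum_f_R0_mysum f n : sum_f_R0 f n = mysum f (S n).
Proof. induction n; simpl. ring. rewrite IHn. simpl. auto. Qed.

Lemma q_bounds l p : (1 <= l)%nat -> (forall i, (1 <= i <= l)%nat -> 0 <= p i < 1) ->
  forall j, 0 <= qof l p j <= 1.
Proof.
  intros Hl hp j. unfold qof. assert (X := Nat.mod_upper_bound j l ltac:(lia)).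
  specialize (hp (j mod l + 1)%nat ltac:(lia)). lra.
Qed.

Lemma q_shift l p s : (fun j => qof l p (s * l + j)%nat) = qof l p.
Proof.
  apply functional_extensionality; intros j. unfold qof. rewrite (Nat.add_comm (s*l)). rewrite Nat.Div0.mod_add. auto.
Qed.

Lemma q0 l p : qof l p 0 = 1 - p 1%nat.
Proof. unfold qof. rewrite Nat.Div0.mod_0_l. auto. Qed.

Definition Ind l n w k t (b : nat -> bool) : R :=
  if andb (is_sigma n (zof l b) k t) (Y_ge l n (zof l b) t w) then 1 else 0.
Definition FA1 l n s (b : nat -> bool) : R := if is_sigma n (zof l b) 1 s then 1 else 0.
Definition NA l n s (b : nat -> bool) : R := if Nat.eqb (rho n (zof l b) s 2) 0 then 1 else 0.
Definition g1 (x : nat -> bool) : R := if x 0%nat then 1 else 0.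
Definition g0 (x : nat -> bool) : R := if x 0%nat then 0 else 1.

Lemma prob_term_Ind l n p k w t : prob_term l n p k w t = Esum (t*l) (qof l p) (Ind l n w k t).
Proof. reflexivity. Qed.

Lemma Ind_01 l n w k t b : 0 <= Ind l n w k t b <= 1.
Proof. unfold Ind. destruct (_ && _)%bool; lra. Qed.

Lemma dep_Ind l n w k t : (1 <= l)%nat -> dep (t*l) (Ind l n w k t).
Proof.
  intros Hl b b' H. unfold Ind. rewrite (is_sigma_dep l n b b' t k t H) by lia.
  rewrite (Y_ge_dep l n b b' t t w H) by lia. auto.
Qed.

Lemma dep_E1 l n s : (1 <= l)%nat -> dep (s*l) (FA1 l n s).
Proof. intros Hl b b' H. unfold FA1. rewrite (is_sigma_dep l n b b' s 1 s H) by lia. auto. Qed.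

Lemma dep_NA l n s : (1 <= l)%nat -> dep (s*l) (NA l n s).
Proof. intros Hl b b' H. unfold NA. rewrite (rho_dep l n b b' s H s 2) by lia. auto. Qed.

Lemma Esum_g l q a c : (1 <= l)%nat -> Esum l q (fun x => if x 0%nat then a else c) = q 0%nat * a + (1 - q 0%nat) * c.
Proof.
  intros Hl. rewrite (Esum_trunc' 1 l). reflexivity.
  intros b b' H. rewrite (H 0%nat) by lia. auto. auto.
Qed.

Lemma rho2_S n z s : rho n z (S s) 2 = (rho n z s 2 + if andb (z (S s) 1%nat) (Nat.ltb (rho n z s 2) n) then 1 else 0)%nat.
Proof. rewrite rho_S'. rewrite rho_1. auto. Qed.

Lemma zof_S1 l b s : zof l b (S s) 1 = shift (s*l) b 0.
Proof. unfold zof, shift. f_equal. replace (S s - 1)%nat with s by lia. lia. Qed.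

Lemma E1_0 l n b : FA1 l n 0 b = 0.
Proof. unfold FA1. destruct (is_sigma _ _ 1 0) eqn:E; auto. apply is_sigma_spec in E as [E _]. discriminate. Qed.

Lemma E1_S l n s b : (1 <= n)%nat -> FA1 l n (S s) b = NA l n s b * g1 (shift (s*l) b).
Proof.
  intros Hn. unfold FA1, NA, g1. rewrite <- zof_S1.
  assert (R := rho2_S n (zof l b) s).
  destruct (is_sigma n (zof l b) 1 (S s)) eqn:E.
  - apply is_sigma_spec in E as [FA1' E2]. assert (X := E2 s ltac:(lia)).
    destruct (zof l b (S s) 1); destruct (Nat.ltb_spec (rho n (zof l b) s 2) n); cbn [andb] in R;
    destruct (Nat.eqb_spec (rho n (zof l b) s 2) 0); try lia; lra.
  - destruct (Nat.eqb_spec (rho n (zof l b) s 2) 0). 2: ring.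
    destruct (zof l b (S s) 1) eqn:Z. 2: ring.
    exfalso. assert (Y : is_sigma n (zof l b) 1 (S s) = true).
    { apply is_sigma_spec. split. rewrite R. rewrite e. destruct (Nat.ltb_spec 0 n); cbn [andb]; lia.
      intros u Hu. assert (X := rho_mono n (zof l b) u s 2 ltac:(lia)). lia. }
    congruence.
Qed.

Lemma NA_S l n s b : (1 <= n)%nat -> NA l n (S s) b = NA l n s b * g0 (shift (s*l) b).
Proof.
  intros Hn. unfold NA, g0. rewrite <- zof_S1.
  rewrite rho2_S.
  destruct (zof l b (S s) 1); destruct (Nat.ltb_spec (rho n (zof l b) s 2) n); cbn [andb];
  destruct (Nat.eqb_spec (rho n (zof l b) s 2) 0);
  destruct (Nat.eqb_spec (rho n (zof l b) s 2 + 1) 0);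
  destruct (Nat.eqb_spec (rho n (zof l b) s 2 + 0) 0); try lia; ring.
Qed.

Lemma pi_pow l n p s : (1 <= l)%nat -> (1 <= n)%nat -> Esum (s*l) (qof l p) (NA l n s) = (p 1%nat)^s.
Proof.
  intros Hl Hn. induction s.
  - simpl. unfold NA. reflexivity.
  - rewrite (Esum_ext _ _ _ (fun b => NA l n s b * g0 (shift (s*l) b))) by (intros; apply NA_S; auto).
    replace (S s * l)%nat with (s*l + l)%nat by (simpl; lia).
    rewrite Esum_prod; [| apply dep_NA; auto | intros b b' H; unfold g0; rewrite (H 0%nat) by lia; auto].
    rewrite q_shift, IHs. unfold g0. rewrite Esum_g by auto. rewrite q0. simpl. ring.
Qed.

Lemma P1_sum l n p S0 : (1 <= l)%nat -> (1 <= n)%nat ->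
  mysum (fun s => Esum (s*l) (qof l p) (FA1 l n s)) (S S0) = 1 - (p 1%nat)^S0.
Proof.
  intros Hl Hn. induction S0.
  - cbn [mysum]. rewrite (Esum_ext _ _ _ (fun _ => 0)) by (intros; apply E1_0).
    rewrite Esum_const. simpl. ring.
  - change (mysum (fun s => Esum (s*l) (qof l p) (FA1 l n s)) (S (S S0)))
      with (mysum (fun s => Esum (s*l) (qof l p) (FA1 l n s)) (S S0) + Esum (S S0 * l) (qof l p) (FA1 l n (S S0))).
    rewrite IHS0.
    rewrite (Esum_ext _ _ _ (fun b => NA l n S0 b * g1 (shift (S0*l) b))) by (intros; apply E1_S; auto).
    replace (S S0 * l)%nat with (S0*l + l)%nat by (simpl; lia).
    rewrite Esum_prod; [| apply dep_NA; auto | intros b b' H; unfold g1; rewrite (H 0%nat) by lia; auto].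
    rewrite q_shift, pi_pow by auto. unfold g1. rewrite Esum_g by auto. rewrite q0. simpl. ring.
Qed.

Lemma Ind_key l n w k s t b : (1 <= k)%nat -> (S k <= n)%nat ->
  is_sigma n (zof l b) 1 s = true ->
  Ind l n w k t (shift (s*l) b) <= Ind l n w (S k) (s + t) b.
Proof.
  intros Hk Hn H1. unfold Ind.
  destruct (is_sigma n (zof l (shift (s*l) b)) k t) eqn:A;
  destruct (Y_ge l n (zof l (shift (s*l) b)) t w) eqn:B; cbn [andb];
  try (destruct (_ && _)%bool; lra).
  destruct (key l n b s k t w Hk Hn H1 A B) as [C D]. rewrite C, D. simpl. lra.
Qed.

Lemma pointwise l n w k S0 T b : (1 <= k)%nat -> (S k <= n)%nat ->
  mysum (fun s => mysum (fun t => FA1 l n s b * Ind l n w k t (shift (s*l) b)) T) (S S0)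
  <= mysum (fun u => Ind l n w (S k) u b) (S S0 + T).
Proof.
  intros Hk Hn.
  assert (Hnn : 0 <= mysum (fun u => Ind l n w (S k) u b) (S S0 + T))
    by (apply mysum_nonneg; intros; apply Ind_01).
  rewrite (mysum_ext_lt _ (fun s => FA1 l n s b * mysum (fun t => Ind l n w k t (shift (s*l) b)) T))
    by (intros; apply mysum_scal_l).
  destruct (classic (exists s0, is_sigma n (zof l b) 1 s0 = true)) as [[s0 Hs0]|Hno].
  - rewrite (mysum_single _ _ s0).
    + destruct (Nat.ltb_spec s0 (S S0)); [|lra].
      unfold FA1 at 1. rewrite Hs0. rewrite Rmult_1_l.
      apply Rle_trans with (mysum (fun t => Ind l n w (S k) (s0 + t) b) T).
      * apply mysum_mono_lt. intros. apply Ind_key; auto.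
      * apply Rle_trans with (mysum (fun u => Ind l n w (S k) u b) (s0 + T)).
        -- rewrite (mysum_shift (fun u => Ind l n w (S k) u b) s0 T).
           assert (Y := mysum_nonneg (fun u => Ind l n w (S k) u b) s0 (fun i => proj1 (Ind_01 l n w (S k) i b))).
           lra.
        -- apply mysum_le_N. intros; apply Ind_01. lia.
    + intros s Hs. unfold FA1. destruct (is_sigma n (zof l b) 1 s) eqn:E; auto.
      exfalso. apply is_sigma_spec in E as [Ea Eb]. apply is_sigma_spec in Hs0 as [Ha Hb].
      destruct (Nat.lt_total s s0) as [L|[L|L]]. apply (Hb s L Ea). exact (Hs L). apply (Eb s0 L Ha).
  - rewrite (mysum_ext_lt _ (fun _ => 0)).
    + assert (Z: forall N, mysum (fun _ => 0) N = 0) by (induction N; simpl; try rewrite IHN; lra).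
      rewrite Z. exact Hnn.
    + intros s _. unfold FA1. destruct (is_sigma n (zof l b) 1 s) eqn:E. exfalso; eauto. ring.
Qed.

Lemma main_ineq l n p w k (Hl : (2 <= l)%nat)
  (hp : forall i, (1 <= i <= l)%nat -> 0 <= p i < 1)
  (Hk : (1 <= k)%nat) (Hn : (S k <= n)%nat) S0 T :
  (1 - (p 1%nat)^S0) * mysum (prob_term l n p k w) T <= mysum (prob_term l n p (S k) w) (S S0 + T).
Proof.
  set (q := qof l p).
  assert (Hq : forall j, (j < (S S0 + T) * l)%nat -> 0 <= q j <= 1) by (intros; apply q_bounds; auto; lia).
  set (M := ((S S0 + T) * l)%nat).
  set (H := fun s t b => FA1 l n s b * Ind l n w k t (shift (s*l) b)).
  assert (Hdep : forall s t, dep (s*l + t*l) (H s t)).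
  { intros s t b b' E. unfold H.
    rewrite (dep_E1 l n s ltac:(lia) b b') by (intros; apply E; lia).
    rewrite (dep_Ind l n w k t ltac:(lia) (shift (s*l) b) (shift (s*l) b')). auto.
    intros j Hj. unfold shift. apply E. lia. }
  set (X := mysum (fun s => mysum (fun t => Esum (s*l + t*l) q (H s t)) T) (S S0)).
  assert (E1 : X = (1 - (p 1%nat)^S0) * mysum (prob_term l n p k w) T).
  { unfold X. rewrite <- (P1_sum l n p S0) by lia.
    rewrite <- mysum_scal_r.
    apply mysum_ext_lt. intros s _. rewrite <- mysum_scal_l.
    apply mysum_ext_lt. intros t _. unfold H. rewrite Esum_prod.
    unfold q. rewrite q_shift. rewrite prob_term_Ind. auto.
    apply dep_E1; lia. apply dep_Ind; lia. }
  assert (E2 : X = Esum M q (fun b => mysum (fun s => mysum (fun t => H s t b) T) (S S0))).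
  { rewrite (Esum_mysum M q (fun s b => mysum (fun t => H s t b) T)).
    unfold X. apply mysum_ext_lt. intros s Hs.
    rewrite (Esum_mysum M q (fun t b => H s t b)).
    apply mysum_ext_lt. intros t Ht. symmetry. apply Esum_trunc'. apply Hdep.
    unfold M. nia. }
  assert (E3 : mysum (prob_term l n p (S k) w) (S S0 + T)
     = Esum M q (fun b => mysum (fun u => Ind l n w (S k) u b) (S S0 + T))).
  { rewrite (Esum_mysum M q (fun u b => Ind l n w (S k) u b)).
    apply mysum_ext_lt. intros u Hu. rewrite prob_term_Ind. symmetry. apply Esum_trunc'.
    apply dep_Ind; lia. unfold M. nia. }
  rewrite <- E1, E2, E3. apply Esum_mono. auto.
  intros b. unfold H. apply pointwise; auto.
Qed.

Lemma prob_term_nonneg l n p k w t (Hl : (1 <= l)%nat)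
  (hp : forall i, (1 <= i <= l)%nat -> 0 <= p i < 1) : 0 <= prob_term l n p k w t.
Proof.
  rewrite prob_term_Ind. apply Esum_nonneg. intros; apply q_bounds; auto. intros; apply Ind_01.
Qed.

Lemma step l n p w k (Hl : (2 <= l)%nat)
  (hp : forall i, (1 <= i <= l)%nat -> 0 <= p i < 1)
  (Hk : (1 <= k)%nat) (Hn : (S k <= n)%nat) B :
  (forall U, mysum (prob_term l n p (S k) w) U <= B) ->
  forall T, mysum (prob_term l n p k w) T <= B.
Proof.
  intros HB T.
  set (A := mysum (prob_term l n p k w) T).
  assert (HA : 0 <= A) by (apply mysum_nonneg; intros; apply prob_term_nonneg; auto; lia).
  assert (HB0 : 0 <= B) by (apply Rle_trans with (mysum (prob_term l n p (S k) w) 0); [simpl; lra| auto]).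
  destruct (Rle_lt_dec A B) as [|Hlt]; auto. exfalso.
  assert (Hp1 : 0 <= p 1%nat < 1) by (apply hp; lia).
  assert (Ay : 0 < (A - B) / A) by (apply Rdiv_lt_0_compat; lra).
  destruct (pow_lt_1_zero (p 1%nat) ltac:(rewrite Rabs_right; lra) _ Ay) as [N HN].
  specialize (HN N (le_n N)). rewrite Rabs_right in HN by (apply Rle_ge, pow_le; lra).
  assert (Hm := main_ineq l n p w k Hl hp Hk Hn N T). fold A in Hm.
  specialize (HB (S N + T)%nat).
  assert (Z : (p 1%nat)^N * A < A - B).
  { apply Rmult_lt_compat_r with (r := A) in HN; [|lra].
    replace ((A - B) / A * A) with (A - B) in HN by (field; lra). lra. }
  nra.
Qed.

Lemma chain l n p w (Hl : (2 <= l)%nat)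
  (hp : forall i, (1 <= i <= l)%nat -> 0 <= p i < 1) d :
  forall k B, (1 <= k)%nat -> (k + d <= n)%nat ->
  (forall U, mysum (prob_term l n p (k + d) w) U <= B) ->
  forall T, mysum (prob_term l n p k w) T <= B.
Proof.
  induction d; intros k B Hk Hn HB.
  - rewrite Nat.add_0_r in HB. auto.
  - apply step; auto. lia. apply IHd. lia. lia.
    replace (S k + d)%nat with (k + S d)%nat by lia. auto.
Qed.

Lemma partial_le f L : (forall i, 0 <= f i) -> infinite_sum f L -> forall U, mysum f U <= L.
Proof.
  intros Hf HL U. destruct (Rle_lt_dec (mysum f U) L) as [|Hlt]; auto. exfalso.
  destruct (HL (mysum f U - L) ltac:(lra)) as [N HN].
  specialize (HN (max N U) (Nat.le_max_l _ _)).
  unfold Rdist in HN. rewrite sum_f_R0_mysum in HN.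
  assert (X := mysum_le_N f U (S (max N U)) Hf ltac:(lia)).
  apply Rabs_def2 in HN. lra.
Qed.

Lemma lim_le f L B : infinite_sum f L -> (forall U, mysum f U <= B) -> L <= B.
Proof.
  intros HL HB. destruct (Rle_lt_dec L B) as [|Hlt]; auto. exfalso.
  destruct (HL (L - B) ltac:(lra)) as [N HN].
  specialize (HN N (le_n N)). unfold Rdist in HN. rewrite sum_f_R0_mysum in HN.
  specialize (HB (S N)). apply Rabs_def2 in HN. lra.
Qed.

Theorem proposition1 (l n : nat) (p : nat -> R)
  (hl : (2 <= l)%nat)
  (hp : forall i, (1 <= i <= l)%nat -> 0 <= p i < 1)
  (k k' : nat) (hk : (1 <= k <= k')%nat) (hk' : (k' <= n)%nat)
  (w : nat -> nat) (P P' : R)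
  (HP : infinite_sum (prob_term l n p k w) P)
  (HP' : infinite_sum (prob_term l n p k' w) P') :
  P <= P'.
Proof.
  apply (lim_le _ _ _ HP).
  apply (chain l n p w hl hp (k' - k) k P' ltac:(lia) ltac:(lia)).
  replace (k + (k' - k))%nat with k' by lia.
  apply partial_le; auto. intros; apply prob_term_nonneg; auto; lia.
Qed.
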